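(* Let $G=(K\cup I,E)$ be a split graph and $(V,\mathcal{F})$ the split graph vertex shelling antimatroid defined on $G$. Then the family $\mathcal{F}_*$ of $*$-feasible sets equals the family of filters of the poset $(K\cup I,\prec)$.
   Context: A split graph $G=(K\cup I,E)$ is a finite simple graph whose vertex set $V=K\cup I$ comes with a fixed partition into a clique $K$ and an independent set $I$. We write $u\sim v$ for adjacency; for $F\subseteq V$, $N(F)$ is the set of vertices of $V\setminus F$ adjacent to some vertex of $F$. A vertex is simplicial if its neighbours induce a clique. The split graph vertex shelling antimatroid of $G$ is $(V,\mathcal{F})$ where $F\subseteq V$ is feasible iff there is an ordering $f_1,\dots,f_{|F|}$ of $F$ such that each $f_j$ is simplicial in $G$ minus $\{f_1,\dots,f_{j-1}\}$ (the empty set is feasible). A feasible set $F$ is $*$-feasible if $N(F)\subseteq K$; $\mathcal{F}_*$ is the family of $*$-feasible sets. The strict order $\prec$ on $K\cup I$ is defined by $u\prec v$ iff $u\in K$, $v\in I$ and $u\sim v$ (its reflexive closure is a partial order of height at most two). A filter of a poset is a subset $F$ such that $a\in F$ and $a\preceq b$ imply $b\in F$. *)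

(* Defs.v *)
From mathcomp Require Import all_boot.
Set Implicit Arguments. Unset Strict Implicit. Unset Printing Implicit Defensive.

Section SplitGraph.
Variable T : finType.
Variable e : rel T.

Definition simple_graph := symmetric e /\ irreflexive e.

(* G = (K u I, E) split graph, with I = ~: K *)
Definition is_split_graph (K : {set T}) :=
  simple_graph /\
  (forall u v, u \in K -> v \in K -> u != v -> e u v) /\
  (forall u v, u \notin K -> v \notin K -> ~~ e u v).

(* v is simplicial in G minus the vertex set R: v is a vertex of G - R and
   its neighbours in G - R induce a clique *)
Definition simplicial_in (R : {set T}) (v : T) : bool :=
  (v \notin R) &&
  [forall x, forall y,
     [&& x \notin R, y \notin R, e v x, e v y & x != y] ==> e x y].

Fixpoint shelling_from (R : {set T}) (s : seq T) : bool :=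
  match s with
  | [::] => true
  | x :: s' => simplicial_in R x && shelling_from (x |: R) s'
  end.

Definition feasible (F : {set T}) : Prop :=
  exists s : seq T, [/\ uniq s, shelling_from set0 s & [set x in s] = F].

Definition nbhd (F : {set T}) : {set T} :=
  [set v | (v \notin F) && [exists u in F, e u v]].

Definition star_feasible (K : {set T}) (F : {set T}) : Prop :=
  feasible F /\ nbhd F \subset K.

Definition prec (K : {set T}) (u v : T) : bool :=
  [&& u \in K, v \notin K & e u v].

Definition is_filter (K : {set T}) (F : {set T}) : Prop :=
  forall a b, a \in F -> (a == b) || prec K a b -> b \in F.

End SplitGraph.

(* Main.v *)
Require Import Defs.
From mathcomp Require Import all_boot.

Section Aux.
Variable T : finType.
Variable e : rel T.
Variable K : {set T}.

Definition good (R : {set T}) (x : T) := forall y, y \notin R -> e x y -> y \in K.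

Lemma good_simpl (R : {set T}) x : is_split_graph e K -> x \notin R -> good R x -> simplicial_in e R x.
Proof.
move=> [_ [HK _]] xR g; rewrite /simplicial_in xR /=.
apply/forallP=> a; apply/forallP=> b; apply/implyP=> /and5P [aR bR ea eb ab].
by apply: HK => //; [apply: g aR ea | apply: g bR eb].
Qed.

Lemma shell_A (s : seq T) (R : {set T}) : is_split_graph e K -> uniq s -> (forall x, x \in s -> x \notin R) ->
  (forall x, x \in s -> good R x) -> shelling_from e R s.
Proof.
move=> sg; elim: s R => [//|x s IH] R /= /andP [xs us] nR gR.
rewrite good_simpl //; last by apply: gR; rewrite inE eqxx.
  2: by apply: nR; rewrite inE eqxx.
apply: IH => //.
- move=> y ys; rewrite in_setU1 negb_or nR ?inE ?ys ?orbT // andbT.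
  by apply/negP=> /eqP yx; rewrite -yx ys in xs.
- move=> y ys z zR; apply: gR; first by rewrite inE ys orbT.
  by move: zR; rewrite in_setU1 negb_or => /andP [].
Qed.

Lemma shell_cat (s1 s2 : seq T) (R : {set T}) : shelling_from e R s1 -> shelling_from e (R :|: [set x in s1]) s2 ->
  shelling_from e R (s1 ++ s2).
Proof.
elim: s1 R => [|x s1 IH] R /=.
  by have -> : R :|: [set x in [::]] = R by apply/setP=> y; rewrite !inE orbF.
move=> /andP [-> h1] h2; apply: IH => //.
suff -> : x |: R :|: [set x0 in s1] = R :|: [set x0 in x :: s1] by [].
by apply/setP=> y; rewrite !inE; case: (y == x); case: (y \in R); case: (y \in s1).
Qed.
End Aux.

Theorem mainTheorem8 (T : finType) (e : rel T) (K : {set T}) :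
  is_split_graph e K ->
  forall F : {set T}, star_feasible e K F <-> is_filter e K F.
Proof.
move=> sg F; have [[esym eirr] [HK HI]] := sg; split.
- move=> [_ sub] a b aF /orP [/eqP <- //|/and3P [aK bK eab]].
  apply/negPn/negP=> bF.
  have : b \in nbhd e F by rewrite inE bF /=; apply/existsP; exists a; rewrite aF.
  by move/(subsetP sub); rewrite (negbTE bK).
- move=> filt; split.
  + exists (enum (F :\: K) ++ enum (F :&: K)); split.
    * rewrite cat_uniq !enum_uniq /= andbT; apply/hasPn=> x /=.
      rewrite !mem_enum !inE; case: (x \in K); case: (x \in F) => //.
    * apply: shell_cat.
      -- apply: (@shell_A _ e K) => // [|x|x]; rewrite ?enum_uniq //; first by rewrite inE.
         rewrite mem_enum inE => /andP [xK _] y _ exy.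
         apply/negPn/negP=> yK; by move: (HI _ _ xK yK); rewrite exy.
      -- apply: (@shell_A _ e K) => // [|x|x]; rewrite ?enum_uniq //; rewrite mem_enum inE => /andP [xF xK].
            by rewrite !inE mem_enum !inE xF xK.
         move=> y; rewrite !inE mem_enum !inE => yR exy.
         apply/negPn/negP=> yK.
         have yF : y \in F by apply: (filt x y xF); rewrite /prec xK yK exy orbT.
         by move: yR; rewrite yF yK.
    * apply/setP=> x; rewrite !inE mem_cat !mem_enum !inE.
      by case: (x \in K); case: (x \in F).
  + apply/subsetP=> v; rewrite inE => /andP [vF /existsP [u /andP [uF euv]]].
    apply/negPn/negP=> vK.
    have uK : u \in K by apply/negPn/negP=> uK; move: (HI _ _ uK vK); rewrite euv.
    by move: vF; rewrite (filt u v) // /prec uK vK euv orbT.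
Qed.
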